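(* Let $0\le\lambda<\gamma\le\delta$ and let $\mathfrak{f}=\mathfrak{s}+\overline{\mathfrak{t}}\in\mathcal{H}^0$ with $\mathfrak{s}(z)=z+\sum_{m\ge2}a_mz^m$, $\mathfrak{t}(z)=\sum_{m\ge2}b_mz^m$. If $$\sum_{m=2}^\infty m^2[2\gamma+(\delta-\gamma)(m-1)](|a_m|+|b_m|)\le2(\gamma-\lambda),$$ then $\mathfrak{f}\in\mathcal{R}_H^0(\gamma,\delta,\lambda)$.
   Context: Let $\mathcal{U}=\{z\in\mathbb{C}:|z|<1\}$. $\mathcal{H}^0$ denotes the class of complex-valued harmonic functions $\mathfrak{f}=\mathfrak{s}+\overline{\mathfrak{t}}$ on $\mathcal{U}$, where $\mathfrak{s}(z)=z+\sum_{m\ge2}a_mz^m$ and $\mathfrak{t}(z)=\sum_{m\ge2}b_mz^m$ are analytic in $\mathcal{U}$. For real $0\le\lambda<\gamma\le\delta$, $\mathcal{R}_H^0(\gamma,\delta,\lambda)$ is the class of $\mathfrak{f}=\mathfrak{s}+\overline{\mathfrak{t}}\in\mathcal{H}^0$ such that for all $z\in\mathcal{U}$, $\mathrm{Re}\left[\gamma\mathfrak{s}'(z)+\delta z\mathfrak{s}''(z)+\frac{\delta-\gamma}{2}z^2\mathfrak{s}'''(z)-\lambda\right]>\left|\gamma\mathfrak{t}'(z)+\delta z\mathfrak{t}''(z)+\frac{\delta-\gamma}{2}z^2\mathfrak{t}'''(z)\right|$. *)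

(* Defs.v *)
From Stdlib Require Import Reals.
From Coquelicot Require Import Coquelicot.
Open Scope R_scope.

Definition in_U (z : C) : Prop := Cmod z < 1.

Definition normalized_s (a : nat -> C) (s : C -> C) : Prop :=
  a 0%nat = 0%C /\ a 1%nat = 1%C /\
  forall z : C, in_U z -> is_pseries a z (s z).

Definition normalized_t (b : nat -> C) (t : C -> C) : Prop :=
  b 0%nat = 0%C /\ b 1%nat = 0%C /\
  forall z : C, in_U z -> is_pseries b z (t z).

Definition Lop (gamma delta : R) (g1 g2 g3 : C -> C) (z : C) : C :=
  (RtoC gamma * g1 z + RtoC delta * z * g2 z
   + RtoC ((delta - gamma) / 2) * (z * z) * g3 z)%C.

Definition derivs3_on_U (g g1 g2 g3 : C -> C) : Prop :=
  forall z : C, in_U z ->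
    is_derive g z (g1 z) /\ is_derive g1 z (g2 z) /\ is_derive g2 z (g3 z).

(* f = s + conj t belongs to R_H^0(gamma, delta, lambda)
   (membership in H^0 is expressed separately by normalized_s/normalized_t). *)
Definition in_RH0 (gamma delta lambda : R) (s t : C -> C) : Prop :=
  exists s1 s2 s3 t1 t2 t3 : C -> C,
    derivs3_on_U s s1 s2 s3 /\ derivs3_on_U t t1 t2 t3 /\
    forall z : C, in_U z ->
      Re (Lop gamma delta s1 s2 s3 z) - lambda
        > Cmod (Lop gamma delta t1 t2 t3 z).

(* Main.v *)
Require Import Defs.
From Stdlib Require Import Reals Lra Lia.
From Coquelicot Require Import Coquelicot.
Open Scope R_scope.

Lemma L0 (u : nat -> R) (Sv : R) :
  (forall n, 0 <= u n) -> is_series u Sv -> forall n, u n <= Sv.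
Proof.
  intros Hp Hs n.
  assert (Hl : is_lim_seq (sum_n u) Sv) by exact Hs.
  assert (H1 : forall n, 0 <= sum_n u n /\ u n <= sum_n u n).
  { induction n0. rewrite sum_O. split; [apply Hp| lra].
    rewrite sum_Sn. destruct IHn0. specialize (Hp (S n0)). change plus with Rplus. simpl. split; lra. }
  eapply Rle_trans. apply (H1 n).
  apply (is_lim_seq_incr_compare _ _ Hl). intro m. rewrite sum_Sn. specialize (Hp (S m)). simpl. change plus with Rplus. lra.
Qed.

Lemma L5 {K : AbsRing} {V : NormedModule K} (a : nat -> V) (b : nat -> R) la lb :
  is_series a la -> is_series b lb -> (forall n, norm (a n) <= b n) -> norm la <= lb.
Proof.
  intros Ha Hb Hn.
  assert (H1 : is_lim_seq (fun N => norm (sum_n a N)) (norm la)).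
  { apply (filterlim_comp _ _ _ (sum_n a) norm eventually (locally la)). exact Ha. apply filterlim_norm. }
  assert (H2 : is_lim_seq (sum_n b) lb) by exact Hb.
  refine (is_lim_seq_le _ _ (Finite _) (Finite _) _ H1 H2).
  intro N. unfold sum_n. eapply Rle_trans. apply norm_sum_n_m. apply sum_n_m_le. exact Hn.
Qed.

Lemma lim_ratio : is_lim_seq (fun n => INR (S (S n)) / INR (S n)) 1.
Proof.
  apply is_lim_seq_ext with (fun n => 1 + / INR (S n)).
  { intro n. rewrite (S_INR (S n)). field. apply not_0_INR. lia. }
  assert (H0 : is_lim_seq (fun n => / INR (S n)) 0).
  { assert (H := is_lim_seq_inv (fun n => INR (S n)) p_infty).
    change (Rbar_inv p_infty) with (Finite 0) in H. apply H.
    apply (proj1 (is_lim_seq_incr_1 INR p_infty)). apply is_lim_seq_INR. discriminate. }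
  generalize (is_lim_seq_plus' _ _ 1 0 (is_lim_seq_const 1) H0). rewrite Rplus_0_r. auto.
Qed.

Lemma lim_pow (u : nat -> R) (l : R) k : is_lim_seq u l -> is_lim_seq (fun n => u n ^ k) (l ^ k).
Proof.
  intro H. induction k. simpl. apply is_lim_seq_const.
  simpl. apply (is_lim_seq_mult' _ _ l (l ^ k)). exact H. exact IHk.
Qed.

Lemma L1q (k : nat) (q : R) : 0 < q < 1 -> ex_series (fun n => INR (S n) ^ k * q ^ n).
Proof.
  intros Hq.
  apply ex_series_ext with (fun n => Rabs (INR (S n) ^ k * q ^ n)).
  { intro n. apply Rabs_pos_eq. apply Rmult_le_pos; apply pow_le; [apply pos_INR| lra]. }
  apply (ex_series_DAlembert _ q). lra.
  { intro n. apply Rmult_integral_contrapositive. split; apply pow_nonzero; [apply not_0_INR; lia| lra]. }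
  apply is_lim_seq_ext with (fun n => (INR (S (S n)) / INR (S n)) ^ k * q).
  { intro n. assert (A1 : 0 < INR (S n) ^ k) by (apply pow_lt, lt_0_INR; lia).
    assert (A2 : 0 < q ^ n) by (apply pow_lt; lra).
    assert (A3 : 0 < INR (S (S n)) ^ k) by (apply pow_lt, lt_0_INR; lia).
    replace (q ^ S n) with (q * q ^ n) by (simpl; ring).
    rewrite Rabs_pos_eq. unfold Rdiv. rewrite Rpow_mult_distr, pow_inv.
    field. split; lra.
    apply Rlt_le. unfold Rdiv. apply Rmult_lt_0_compat. apply Rmult_lt_0_compat. lra. apply Rmult_lt_0_compat; lra.
    apply Rinv_0_lt_compat. apply Rmult_lt_0_compat; lra. }
  generalize (is_lim_seq_mult' _ _ (1 ^ k) q (lim_pow _ _ k lim_ratio) (is_lim_seq_const q)).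
  rewrite pow1, Rmult_1_l. auto.
Qed.

Lemma L1 (k : nat) (r : R) : 0 <= r < 1 -> ex_series (fun n => INR (S n) ^ k * r ^ n).
Proof.
  intros Hr. set (q := (1 + r) / 2).
  apply (ex_series_le (K := R_AbsRing) (V := R_CompleteNormedModule) _ (fun n => INR (S n) ^ k * q ^ n)).
  2: apply L1q; unfold q; lra.
  intro n. change norm with Rabs. rewrite Rabs_pos_eq.
  apply Rmult_le_compat_l. apply pow_le, pos_INR. apply pow_incr. unfold q; lra.
  apply Rmult_le_pos; apply pow_le; [apply pos_INR| lra].
Qed.

Definition PS (a : nat -> C) (z : C) : C :=
  @iota C_CompleteNormedModule (fun l => is_pseries a z l).

Lemma PS_correct a z l : is_pseries a z l -> PS a z = l.
Proof.
  intro H. unfold PS, is_pseries, is_series in *.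
  exact (@iota_filterlim_locally C_AbsRing C_CompleteNormedModule nat eventually _ _ l H).
Qed.

Definition dc (a : nat -> C) (n : nat) : C := (RtoC (INR (S n)) * a (S n))%C.

Definition Bnd (a : nat -> C) (M : R) (p : nat) := forall n, Cmod (a n) <= M * INR (S n) ^ p.

Lemma Cmod_pow z n : Cmod (pow_n z n) = Cmod z ^ n.
Proof.
  induction n. simpl. apply Cmod_1. simpl pow_n. change (Cmod (z * pow_n z n)%C = Cmod z ^ S n).
  rewrite Cmod_mult, IHn. simpl. ring.
Qed.

Lemma PS_ex a M p z : Bnd a M p -> Cmod z < 1 -> is_pseries a z (PS a z).
Proof.
  intros Hb Hz.
  assert (Hex : ex_series (fun n => scal (pow_n z n) (a n))).
  { apply (ex_series_le (K := C_AbsRing) (V := C_CompleteNormedModule) _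
      (fun n => M * (INR (S n) ^ p * Cmod z ^ n))).
    - intro n. change (Cmod (pow_n z n * a n)%C <= M * (INR (S n) ^ p * Cmod z ^ n)).
      rewrite Cmod_mult, Cmod_pow.
      assert (0 <= Cmod z ^ n) by (apply pow_le, Cmod_ge_0).
      specialize (Hb n). nra.
    - apply (ex_series_scal_l (K := R_AbsRing) (V := R_NormedModule)). apply L1. split. apply Cmod_ge_0. exact Hz. }
  destruct Hex as [l Hl]. rewrite (PS_correct a z l Hl). exact Hl.
Qed.

Lemma dc_bnd a M p : 0 <= M -> Bnd a M p -> Bnd (dc a) (M * 2 ^ p) (S p).
Proof.
  intros HM Hb n. unfold dc. rewrite Cmod_mult, Cmod_R, Rabs_pos_eq by apply pos_INR.
  specialize (Hb (S n)).
  assert (H1 : INR (S (S n)) ^ p <= 2 ^ p * INR (S n) ^ p).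
  { rewrite <- Rpow_mult_distr. apply pow_incr. split. apply pos_INR.
    rewrite (S_INR (S n)). rewrite (S_INR n). generalize (pos_INR n). lra. }
  assert (0 <= INR (S n)) by apply pos_INR.
  assert (0 <= INR (S (S n)) ^ p) by (apply pow_le, pos_INR).
  rewrite <- tech_pow_Rmult.
  apply Rle_trans with (INR (S n) * (M * INR (S (S n)) ^ p)).
  apply Rmult_le_compat_l; assumption.
  replace (M * 2 ^ p * (INR (S n) * INR (S n) ^ p)) with (INR (S n) * (M * (2 ^ p * INR (S n) ^ p))) by ring.
  apply Rmult_le_compat_l. assumption. apply Rmult_le_compat_l; assumption.
Qed.

Definition Fq (n : nat) (u z : C) : C :=
  (pow_n u (S n) - pow_n z (S n) - RtoC (INR (S n)) * pow_n z n * (u - z))%C.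

Lemma pow_n_S (z : C) n : pow_n z (S n) = (z * pow_n z n)%C.
Proof. reflexivity. Qed.

Lemma Fq_rec n u z : Fq (S n) u z = (u * Fq n u z + RtoC (INR (S n)) * pow_n z n * ((u - z) * (u - z)))%C.
Proof.
  unfold Fq. rewrite !pow_n_S. rewrite (S_INR (S n)). rewrite RtoC_plus. ring.
Qed.

Lemma Fq_bound r u z : 0 <= r -> Cmod u <= r -> Cmod z <= r ->
  forall n, r * Cmod (Fq n u z) <= INR n ^ 2 * r ^ n * Cmod (u - z) ^ 2.
Proof.
  intros Hr Hu Hz n. induction n.
  - unfold Fq. replace (pow_n u 1 - pow_n z 1 - RtoC (INR 1) * pow_n z 0 * (u - z))%C with (RtoC 0).
    rewrite Cmod_0. simpl. nra.
    rewrite !pow_n_S. simpl pow_n. change one with (RtoC 1). simpl INR. ring.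
  - rewrite Fq_rec.
    set (d := Cmod (u - z)). set (f := Cmod (Fq n u z)).
    assert (Hd : 0 <= d) by apply Cmod_ge_0. assert (Hf : 0 <= f) by apply Cmod_ge_0.
    assert (H1 : Cmod (u * Fq n u z + RtoC (INR (S n)) * pow_n z n * ((u - z) * (u - z)))%C
               <= r * f + INR (S n) * r ^ n * (d * d)).
    { eapply Rle_trans. apply Cmod_triangle. rewrite !Cmod_mult, Cmod_R, Rabs_pos_eq by apply pos_INR.
      rewrite Cmod_pow. fold d. fold f.
      assert (0 <= Cmod z ^ n) by (apply pow_le, Cmod_ge_0).
      assert (Cmod z ^ n <= r ^ n) by (apply pow_incr; split; [apply Cmod_ge_0| exact Hz]).
      assert (0 <= INR (S n)) by apply pos_INR.
      assert (0 <= d * d) by nra.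
      apply Rplus_le_compat. apply Rmult_le_compat_r; assumption.
      apply Rmult_le_compat_r. assumption. apply Rmult_le_compat_l; assumption. }
    assert (0 <= r ^ n) by (apply pow_le; exact Hr).
    assert (0 <= INR n) by apply pos_INR.
    assert (HY : 0 <= r * r ^ n * (d * d)) by (apply Rmult_le_pos; [apply Rmult_le_pos|]; nra).
    assert (H2 : r * Cmod (u * Fq n u z + RtoC (INR (S n)) * pow_n z n * ((u - z) * (u - z)))%C
                 <= r * (r * f + INR (S n) * r ^ n * (d * d))) by (apply Rmult_le_compat_l; assumption).
    assert (H3 : r * (r * f) <= r * (INR n ^ 2 * r ^ n * d ^ 2)) by (apply Rmult_le_compat_l; assumption).
    rewrite S_INR in *.
    replace (INR n ^ 2 * r ^ n * d ^ 2) with (INR n * INR n * (r ^ n * (d * d))) in H3 by ring.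
    replace ((INR n + 1) ^ 2 * r ^ S n * d ^ 2) with ((INR n * INR n + INR n + 1) * (r * r ^ n * (d * d)) + INR n * (r * r ^ n * (d * d))) by (simpl; ring).
    assert (0 <= INR n * (r * r ^ n * (d * d))) by (apply Rmult_le_pos; assumption).
    nra.
Qed.

Lemma tail_series (a : nat -> C) u :
  is_series (fun n => scal (pow_n u n) (a n)) (PS a u) ->
  is_series (fun n => (pow_n u (S n) * a (S n))%C) (PS a u - a O)%C.
Proof.
  intro H. assert (E : (PS a u - a 0%nat + pow_n u 0 * a 0%nat)%C = PS a u).
  { change (pow_n u 0) with (RtoC 1). ring. }
  apply (is_series_incr_1 (fun n => scal (pow_n u n) (a n))).
  change (is_series (fun n => scal (pow_n u n) (a n)) ((PS a u - a 0%nat) + pow_n u 0 * a 0%nat)%C).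
  rewrite E. exact H.
Qed.

Lemma PS_derive a M p z : 0 <= M -> Bnd a M p -> Cmod z < 1 ->
  is_derive (PS a) z (PS (dc a) z).
Proof.
  intros HM Hb Hz. split. apply is_linear_scal_l.
  intros x Hx. apply (@is_filter_lim_locally_unique C_AbsRing (AbsRing_NormedModule C_AbsRing)) in Hx. subst x.
  intros eps.
  set (r := (1 + Cmod z) / 2).
  assert (Hz0 := Cmod_ge_0 z).
  assert (Hr : 0 < r < 1) by (unfold r; lra).
  assert (Hzr : Cmod z < r) by (unfold r; lra).
  destruct (L1 (p + 2) r ltac:(lra)) as [K HK].
  assert (HK0 : 0 <= K).
  { apply (L0 _ K) with (n := O) in HK. eapply Rle_trans; [|exact HK]. apply Rmult_le_pos; apply pow_le; [apply pos_INR|lra].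
    intro n. apply Rmult_le_pos; apply pow_le; [apply pos_INR|lra]. }
  set (Cc := M * 2 ^ p * K / r).
  assert (HC : 0 <= Cc).
  { unfold Cc. apply Rmult_le_pos. apply Rmult_le_pos. apply Rmult_le_pos. lra. apply pow_le; lra. lra.
    apply Rlt_le, Rinv_0_lt_compat; lra. }
  assert (Hd : 0 < Rmin (r - Cmod z) (eps / (Cc + 1))).
  { apply Rmin_pos. lra. apply Rdiv_lt_0_compat. apply cond_pos. lra. }
  apply (@locally_norm_le_locally C_AbsRing (AbsRing_NormedModule C_AbsRing) z). exists (mkposreal _ Hd). intros u Hu.
  unfold ball_norm in Hu. simpl in Hu. change norm with Cmod in Hu |- *.
  change (minus u z) with (u - z)%C in Hu |- *.
  assert (Hud : Cmod (u - z) < r - Cmod z) by (eapply Rlt_le_trans; [exact Hu| apply Rmin_l]).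
  assert (Hue : Cmod (u - z) < eps / (Cc + 1)) by (eapply Rlt_le_trans; [exact Hu| apply Rmin_r]).
  assert (Hur : Cmod u <= r).
  { replace u with ((u - z) + z)%C by ring. eapply Rle_trans. apply Cmod_triangle. lra. }
  set (d := Cmod (u - z)) in *.
  assert (Hd0 : 0 <= d) by apply Cmod_ge_0.
  change (Cmod (PS a u - PS a z - (u - z) * PS (dc a) z)%C <= eps * d).
  assert (Su := tail_series a u (PS_ex a M p u Hb ltac:(lra))).
  assert (Sz := tail_series a z (PS_ex a M p z Hb ltac:(lra))).
  assert (Sd := PS_ex (dc a) (M * 2 ^ p) (S p) z (dc_bnd a M p HM Hb) Hz).
  assert (SG : is_series (fun n => (a (S n) * Fq n u z)%C) (PS a u - PS a z - (u - z) * PS (dc a) z)%C).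
  { assert (H := is_series_minus _ _ _ _ (is_series_minus _ _ _ _ Su Sz) (is_series_scal_l (u - z)%C _ _ Sd)).
    replace (PS a u - PS a z - (u - z) * PS (dc a) z)%C with
        (plus (plus (PS a u - a 0%nat) (opp (PS a z - a 0%nat))) (opp (scal (u - z) (PS (dc a) z))))%C.
    2:{ change ((PS a u - a 0%nat) + - (PS a z - a 0%nat) + - ((u - z) * PS (dc a) z) = PS a u - PS a z - (u - z) * PS (dc a) z)%C. ring. }
    refine (is_series_ext _ _ _ _ H).
    intro n. change ((pow_n u (S n) * a (S n)) + - (pow_n z (S n) * a (S n)) + - ((u - z) * (pow_n z n * dc a n)) = a (S n) * Fq n u z)%C.
    unfold Fq, dc. change (@pow_n (AbsRing.Ring C_AbsRing)) with (@pow_n C_Ring). ring. }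
  set (bn := fun n => (INR (S n) ^ (p + 2) * r ^ n) * (M * 2 ^ p * d ^ 2 / r)).
  assert (Sb : is_series bn (K * (M * 2 ^ p * d ^ 2 / r))) by (apply is_series_scal_r; exact HK).
  assert (Hle := L5 _ bn _ _ SG Sb).
  assert (Hfin : K * (M * 2 ^ p * d ^ 2 / r) <= eps * d).
  { replace (K * (M * 2 ^ p * d ^ 2 / r)) with (Cc * d * d) by (unfold Cc; field; lra).
    assert (Cc * d <= eps).
    { assert (Cc * d <= Cc * (eps / (Cc + 1))) by (apply Rmult_le_compat_l; lra).
      assert (Cc * (eps / (Cc + 1)) <= eps).
      { unfold Rdiv. replace (Cc * (eps * / (Cc + 1))) with (eps * (Cc / (Cc + 1))) by (field; lra).
        assert (Cc / (Cc + 1) <= 1). { apply (Rmult_le_reg_r (Cc + 1)). lra. unfold Rdiv. rewrite Rmult_assoc, Rinv_l; lra. }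
        assert (0 < eps) by apply cond_pos. nra. }
      lra. }
    nra. }
  eapply Rle_trans; [apply Hle| exact Hfin].
  intro n. change norm with Cmod. unfold bn. rewrite Cmod_mult.
  assert (HF := Fq_bound r u z ltac:(lra) Hur ltac:(lra) n).
  fold d in HF.
  set (A := Cmod (a (S n))). set (f := Cmod (Fq n u z)) in *.
  assert (HA : A <= M * 2 ^ p * INR (S n) ^ p).
  { unfold A. eapply Rle_trans. apply Hb.
    assert (H1 : INR (S (S n)) ^ p <= 2 ^ p * INR (S n) ^ p).
    { rewrite <- Rpow_mult_distr. apply pow_incr. split. apply pos_INR.
      rewrite (S_INR (S n)). rewrite (S_INR n). generalize (pos_INR n). lra. }
    rewrite Rmult_assoc. apply Rmult_le_compat_l; assumption. }
  assert (Hf : f <= INR (S n) ^ 2 * r ^ n * d ^ 2 / r).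
  { assert (Hn2 : INR n ^ 2 <= INR (S n) ^ 2).
    { apply pow_incr. split. apply pos_INR. rewrite S_INR. lra. }
    assert (0 <= r ^ n * d ^ 2) by (apply Rmult_le_pos; apply pow_le; lra).
    apply (Rmult_le_reg_l r). lra. unfold Rdiv.
    replace (r * (INR (S n) ^ 2 * r ^ n * d ^ 2 * / r)) with (INR (S n) ^ 2 * (r ^ n * d ^ 2)) by (field; lra).
    eapply Rle_trans. exact HF. rewrite Rmult_assoc. apply Rmult_le_compat_r; assumption. }
  rewrite pow_add.
  replace (INR (S n) ^ p * INR (S n) ^ 2 * r ^ n * (M * 2 ^ p * d ^ 2 / r))
    with ((M * 2 ^ p * INR (S n) ^ p) * (INR (S n) ^ 2 * r ^ n * d ^ 2 / r)) by (field; lra).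
  apply Rmult_le_compat; try assumption. apply Cmod_ge_0. apply Cmod_ge_0.
Qed.

Lemma is_series_eq_val {K : AbsRing} {V : NormedModule K} (a : nat -> V) l1 l2 : l1 = l2 -> is_series a l1 -> is_series a l2.
Proof. intros <-. auto. Qed.

Definition cc (gamma delta : R) (k : nat) : R :=
  gamma * INR (S (S k)) + delta * (INR (S k) * INR (S (S k)))
  + (delta - gamma) / 2 * (INR k * INR (S k) * INR (S (S k))).

Lemma Lseries gamma delta a M z : 0 <= M -> Bnd a M 0 -> Cmod z < 1 ->
  is_series (fun k => (pow_n z (S k) * (RtoC (cc gamma delta k) * a (S (S k))))%C)
    (Lop gamma delta (PS (dc a)) (PS (dc (dc a))) (PS (dc (dc (dc a)))) z - RtoC gamma * a 1%nat)%C.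
Proof.
  intros HM Hb Hz.
  assert (B1 := dc_bnd a M 0 HM Hb).
  assert (HM1 : 0 <= M * 2 ^ 0) by (simpl; lra).
  assert (B2 := dc_bnd _ _ _ HM1 B1).
  assert (HM2 : 0 <= M * 2 ^ 0 * 2 ^ 1) by (simpl; lra).
  assert (B3 := dc_bnd _ _ _ HM2 B2).
  assert (S1 := tail_series _ z (PS_ex _ _ _ z B1 Hz)).
  assert (S2 := is_series_scal_l z _ _ (PS_ex _ _ _ z B2 Hz)).
  assert (S3 := is_series_scal_l (z * z)%C _ _ (PS_ex _ _ _ z B3 Hz)).
  set (v := fun k => (pow_n z (S k) * (RtoC (INR k * INR (S k) * INR (S (S k))) * a (S (S k))))%C).
  assert (S3' : is_series v (scal (z * z)%C (PS (dc (dc (dc a))) z))).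
  { apply is_series_decr_1.
    apply (is_series_eq_val _ (scal (z * z)%C (PS (dc (dc (dc a))) z))).
    { unfold v. change ((z * z) * PS (dc (dc (dc a))) z = (z * z) * PS (dc (dc (dc a))) z + - (pow_n z 1 * (RtoC (INR 0 * INR 1 * INR 2) * a 2%nat)))%C.
      simpl INR. rewrite !Rmult_0_l. ring. }
    refine (is_series_ext _ _ _ _ S3).
    intro n. unfold v, dc. change ((z * z) * (pow_n z n * (INR (S n) * (INR (S (S n)) * (INR (S (S (S n))) * a (S (S (S n))))))) =
      pow_n z (S (S n)) * (RtoC (INR (S n) * INR (S (S n)) * INR (S (S (S n)))) * a (S (S (S n)))))%C.
    rewrite !RtoC_mult. rewrite !pow_n_S. change (@pow_n (AbsRing.Ring C_AbsRing)) with (@pow_n C_Ring). ring. }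
  assert (H := is_series_plus _ _ _ _ (is_series_plus _ _ _ _ (is_series_scal_l (RtoC gamma) _ _ S1)
                 (is_series_scal_l (RtoC delta) _ _ S2)) (is_series_scal_l (RtoC ((delta - gamma) / 2)) _ _ S3')).
  replace (Lop gamma delta (PS (dc a)) (PS (dc (dc a))) (PS (dc (dc (dc a)))) z - RtoC gamma * a 1%nat)%C
    with (plus (plus (scal (RtoC gamma) (PS (dc a) z - dc a 0%nat)%C) (scal (RtoC delta) (scal z (PS (dc (dc a)) z))))
            (scal (RtoC ((delta - gamma) / 2)) (scal (z * z)%C (PS (dc (dc (dc a))) z)))).
  2:{ assert (Hd0 : dc a 0%nat = a 1%nat) by (unfold dc; simpl INR; ring).
      unfold Lop. change (gamma * (PS (dc a) z - dc a 0%nat) + delta * (z * PS (dc (dc a)) z)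
        + RtoC ((delta - gamma) / 2)%R * ((z * z) * PS (dc (dc (dc a))) z) =
        gamma * PS (dc a) z + delta * z * PS (dc (dc a)) z + RtoC ((delta - gamma) / 2)%R * (z * z) * PS (dc (dc (dc a))) z - gamma * a 1%nat)%C.
      rewrite Hd0. ring. }
  refine (is_series_ext _ _ _ _ H).
  intro n. unfold v, dc, cc.
  change ((gamma * (pow_n z (S n) * (INR (S (S n)) * a (S (S n)))) + delta * (z * (pow_n z n * (INR (S n) * (INR (S (S n)) * a (S (S n)))))))
     + RtoC ((delta - gamma) / 2)%R * (pow_n z (S n) * (RtoC (INR n * INR (S n) * INR (S (S n))) * a (S (S n)))) =
     pow_n z (S n) * (RtoC (gamma * INR (S (S n)) + delta * (INR (S n) * INR (S (S n))) + (delta - gamma) / 2 * (INR n * INR (S n) * INR (S (S n))))%R * a (S (S n))))%C.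
  rewrite !RtoC_plus, !RtoC_mult. rewrite !pow_n_S. change (@pow_n (AbsRing.Ring C_AbsRing)) with (@pow_n C_Ring). ring.
Qed.

Lemma bnd_from gamma delta (a b : nat -> C) (Sv : R) :
  0 < gamma -> gamma <= delta ->
  a 0%nat = RtoC 0 -> Cmod (a 1%nat) <= 1 ->
  is_series (fun k : nat =>
        let m := INR (k + 2) in
        m ^ 2 * (2 * gamma + (delta - gamma) * (m - 1))
          * (Cmod (a (k + 2)%nat) + Cmod (b (k + 2)%nat))) Sv ->
  0 <= Sv /\ Bnd a (1 + Sv / (2 * gamma)) 0.
Proof.
  intros Hg Hgd Ha0 Ha1 HS.
  assert (Hpos : forall k, 0 <= (let m := INR (k + 2) in
        m ^ 2 * (2 * gamma + (delta - gamma) * (m - 1))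
          * (Cmod (a (k + 2)%nat) + Cmod (b (k + 2)%nat)))).
  { intro k. simpl. rewrite plus_INR. simpl INR.
    assert (0 <= INR k) by apply pos_INR.
    assert (0 <= Cmod (a (k + 2)%nat)) by apply Cmod_ge_0.
    assert (0 <= Cmod (b (k + 2)%nat)) by apply Cmod_ge_0.
    apply Rmult_le_pos. apply Rmult_le_pos. nra. nra. lra. }
  assert (HL := L0 _ _ Hpos HS).
  assert (HS0 : 0 <= Sv) by (eapply Rle_trans; [apply (Hpos O)| apply (HL O)]).
  split. exact HS0.
  assert (0 <= Sv / (2 * gamma)) by (apply Rdiv_le_0_compat; lra).
  intro n. simpl pow. rewrite Rmult_1_r.
  destruct n as [|[|k]].
  - rewrite Ha0, Cmod_0. lra.
  - lra.
  - specialize (HL k). simpl in HL. rewrite plus_INR in HL. simpl INR in HL.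
    replace (k + 2)%nat with (S (S k)) in HL by lia.
    assert (0 <= INR k) by apply pos_INR.
    assert (0 <= Cmod (a (S (S k)))) by apply Cmod_ge_0.
    assert (0 <= Cmod (b (S (S k)))) by apply Cmod_ge_0.
    assert (2 * gamma * Cmod (a (S (S k))) <= Sv).
    { eapply Rle_trans; [| exact HL].
      set (m := INR k + (1 + 1)) in *.
      assert (X1 : 2 * gamma <= 2 * gamma + (delta - gamma) * (m - 1)) by (unfold m; nra).
      assert (X2 : 1 <= m * (m * 1)) by (unfold m; nra).
      assert (2 * gamma <= m * (m * 1) * (2 * gamma + (delta - gamma) * (m - 1))) by nra.
      nra. }
    assert (Cmod (a (S (S k))) <= Sv / (2 * gamma)).
    { apply (Rmult_le_reg_l (2 * gamma)). lra. replace (2 * gamma * (Sv / (2 * gamma))) with Sv by (field; lra). lra. }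
    lra.
Qed.

Lemma deriv_ext (a : nat -> C) (s : C -> C) M z : 0 <= M -> Bnd a M 0 ->
  (forall w, in_U w -> is_pseries a w (s w)) -> in_U z -> is_derive s z (PS (dc a) z).
Proof.
  intros HM Hb Hs Hz. unfold in_U in *.
  apply (is_derive_ext_loc (PS a)).
  - assert (Hd : 0 < 1 - Cmod z) by lra.
    apply (@locally_norm_le_locally C_AbsRing (AbsRing_NormedModule C_AbsRing) z). exists (mkposreal _ Hd).
    intros w Hw. unfold ball_norm in Hw. simpl in Hw. change norm with Cmod in Hw.
    apply PS_correct. apply Hs.
    replace w with ((w - z) + z)%C by ring. eapply Rle_lt_trans. apply Cmod_triangle.
    change (Cmod (w - z) < 1 - Cmod z) in Hw. lra.
  - apply (PS_derive a M 0 z HM Hb Hz).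
Qed.

Lemma Re_plus_R (A : C) (g : R) : Re (A + RtoC g)%C = Re A + g.
Proof. destruct A. unfold Re, RtoC, Cplus. simpl. ring. Qed.

Theorem theorem8 (gamma delta lambda : R) (a b : nat -> C) (s t : C -> C) :
  0 <= lambda -> lambda < gamma -> gamma <= delta ->
  normalized_s a s -> normalized_t b t ->
  (exists S : R,
     is_series (fun k : nat =>
        let m := INR (k + 2) in
        m ^ 2 * (2 * gamma + (delta - gamma) * (m - 1))
          * (Cmod (a (k + 2)%nat) + Cmod (b (k + 2)%nat))) S
     /\ S <= 2 * (gamma - lambda)) ->
  in_RH0 gamma delta lambda s t.
Proof.
  intros Hl Hlg Hgd [a0 [a1 Hsp]] [b0 [b1 Htp]] [Sv [HS HSle]].
  assert (Hg : 0 < gamma) by lra.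
  destruct (bnd_from gamma delta a b Sv Hg Hgd a0 ltac:(rewrite a1, Cmod_1; lra) HS) as [HS0 Ba].
  assert (HS' : is_series (fun k : nat =>
        let m := INR (k + 2) in
        m ^ 2 * (2 * gamma + (delta - gamma) * (m - 1))
          * (Cmod (b (k + 2)%nat) + Cmod (a (k + 2)%nat))) Sv).
  { refine (is_series_ext _ _ _ _ HS). intro k. cbv beta zeta. match goal with |- ?x = ?y => change (@eq R x y) end. ring. }
  destruct (bnd_from gamma delta b a Sv Hg Hgd b0 ltac:(rewrite b1, Cmod_0; lra) HS') as [_ Bb].
  set (M := 1 + Sv / (2 * gamma)) in *.
  assert (HM : 0 <= M) by (unfold M; assert (0 <= Sv / (2 * gamma)) by (apply Rdiv_le_0_compat; lra); lra).
  assert (HM1 : 0 <= M * 2 ^ 0) by (simpl; lra).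
  assert (HM2 : 0 <= M * 2 ^ 0 * 2 ^ 1) by (simpl; lra).
  exists (PS (dc a)), (PS (dc (dc a))), (PS (dc (dc (dc a)))),
         (PS (dc b)), (PS (dc (dc b))), (PS (dc (dc (dc b)))).
  split; [| split].
  - intros z Hz. split; [| split].
    + apply (deriv_ext a s M z HM Ba Hsp Hz).
    + apply (PS_derive (dc a) (M * 2 ^ 0) 1 z HM1 (dc_bnd a M 0 HM Ba) Hz).
    + apply (PS_derive (dc (dc a)) (M * 2 ^ 0 * 2 ^ 1) 2 z HM2 (dc_bnd _ _ _ HM1 (dc_bnd a M 0 HM Ba)) Hz).
  - intros z Hz. split; [| split].
    + apply (deriv_ext b t M z HM Bb Htp Hz).
    + apply (PS_derive (dc b) (M * 2 ^ 0) 1 z HM1 (dc_bnd b M 0 HM Bb) Hz).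
    + apply (PS_derive (dc (dc b)) (M * 2 ^ 0 * 2 ^ 1) 2 z HM2 (dc_bnd _ _ _ HM1 (dc_bnd b M 0 HM Bb)) Hz).
  - intros z Hz. unfold in_U in Hz.
    assert (LA := Lseries gamma delta a M z HM Ba Hz).
    assert (LB := Lseries gamma delta b M z HM Bb Hz).
    rewrite a1 in LA. rewrite b1 in LB.
    set (A := (Lop gamma delta (PS (dc a)) (PS (dc (dc a))) (PS (dc (dc (dc a)))) z - RtoC gamma * RtoC 1)%C) in LA.
    set (B := (Lop gamma delta (PS (dc b)) (PS (dc (dc b))) (PS (dc (dc (dc b)))) z - RtoC gamma * RtoC 0)%C) in LB.
    set (x := Cmod z).
    assert (Hx0 : 0 <= x) by apply Cmod_ge_0.
    assert (Hcc : forall k, 2 * cc gamma delta k = INR (S (S k)) ^ 2 * (2 * gamma + (delta - gamma) * (INR (S (S k)) - 1))).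
    { intro k. unfold cc. rewrite !S_INR. field. }
    assert (Hcc0 : forall k, 0 <= cc gamma delta k).
    { intro k. assert (H := Hcc k). rewrite !S_INR in H. assert (0 <= INR k) by apply pos_INR.
      assert (0 <= (INR k + 1 + 1) ^ 2 * (2 * gamma + (delta - gamma) * (INR k + 1 + 1 - 1))).
      { apply Rmult_le_pos. apply pow_le. lra. nra. }
      lra. }
    set (term := fun k : nat =>
        let m := INR (k + 2) in
        m ^ 2 * (2 * gamma + (delta - gamma) * (m - 1))
          * (Cmod (a (k + 2)%nat) + Cmod (b (k + 2)%nat))) in HS.
    assert (Hterm : forall k, term k = 2 * cc gamma delta k * (Cmod (a (S (S k))) + Cmod (b (S (S k))))).
    { intro k. unfold term. cbv beta zeta. replace (k + 2)%nat with (S (S k)) by lia. rewrite Hcc. ring. }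
    set (uA := fun k => x * (cc gamma delta k * Cmod (a (S (S k))))).
    set (uB := fun k => x * (cc gamma delta k * Cmod (b (S (S k))))).
    assert (Hsum : forall k, uA k + uB k = x / 2 * term k).
    { intro k. rewrite Hterm. unfold uA, uB. field. }
    assert (Hhalf : is_series (fun k => x / 2 * term k) (x / 2 * Sv)) by (apply (is_series_scal_l (K := R_AbsRing) (V := R_NormedModule)); exact HS).
    assert (HuA : ex_series uA).
    { apply (ex_series_le (K := R_AbsRing) (V := R_CompleteNormedModule) _ (fun k => x / 2 * term k)).
      - intro k. change norm with Rabs. rewrite Rabs_pos_eq. rewrite <- Hsum. unfold uB.
        assert (0 <= x * (cc gamma delta k * Cmod (b (S (S k))))).
        { apply Rmult_le_pos. lra. apply Rmult_le_pos. apply Hcc0. apply Cmod_ge_0. }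
        lra.
        unfold uA. apply Rmult_le_pos. lra. apply Rmult_le_pos. apply Hcc0. apply Cmod_ge_0.
      - exists (x / 2 * Sv). exact Hhalf. }
    assert (HuB : ex_series uB).
    { apply (ex_series_le (K := R_AbsRing) (V := R_CompleteNormedModule) _ (fun k => x / 2 * term k)).
      - intro k. change norm with Rabs. rewrite Rabs_pos_eq. rewrite <- Hsum. unfold uA.
        assert (0 <= x * (cc gamma delta k * Cmod (a (S (S k))))).
        { apply Rmult_le_pos. lra. apply Rmult_le_pos. apply Hcc0. apply Cmod_ge_0. }
        lra.
        unfold uB. apply Rmult_le_pos. lra. apply Rmult_le_pos. apply Hcc0. apply Cmod_ge_0.
      - exists (x / 2 * Sv). exact Hhalf. }
    destruct HuA as [LAv HLA]. destruct HuB as [LBv HLB].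
    assert (Hpowk : forall k, Cmod (pow_n z (S k)) <= x).
    { intro k. rewrite Cmod_pow. fold x. simpl pow. 
      assert (Hxk : x ^ k <= 1 ^ k) by (apply pow_incr; split; [exact Hx0 | apply Rlt_le; exact Hz]). rewrite pow1 in Hxk.
      assert (0 <= x ^ k) by (apply pow_le; lra). nra. }
    assert (HnA : Cmod A <= LAv).
    { apply (L5 _ uA _ _ LA HLA). intro k. change norm with Cmod. unfold uA.
      rewrite !Cmod_mult, Cmod_R, Rabs_pos_eq by apply Hcc0.
      apply Rmult_le_compat_r. apply Rmult_le_pos. apply Hcc0. apply Cmod_ge_0. apply Hpowk. }
    assert (HnB : Cmod B <= LBv).
    { apply (L5 _ uB _ _ LB HLB). intro k. change norm with Cmod. unfold uB.
      rewrite !Cmod_mult, Cmod_R, Rabs_pos_eq by apply Hcc0.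
      apply Rmult_le_compat_r. apply Rmult_le_pos. apply Hcc0. apply Cmod_ge_0. apply Hpowk. }
    assert (Hab : LAv + LBv = x / 2 * Sv).
    { assert (H1 := is_series_plus _ _ _ _ HLA HLB).
      assert (H2 : is_series (fun k => uA k + uB k) (x / 2 * Sv)).
      { refine (is_series_ext _ _ _ _ Hhalf). intro k. rewrite Hsum. reflexivity. }
      assert (H1' : is_series (fun k => uA k + uB k) (LAv + LBv)) by exact H1.
      rewrite <- (is_series_unique _ _ H1'). apply is_series_unique. exact H2. }
    assert (EA : Lop gamma delta (PS (dc a)) (PS (dc (dc a))) (PS (dc (dc (dc a)))) z = (A + RtoC gamma)%C) by (unfold A; ring).
    assert (EB : Lop gamma delta (PS (dc b)) (PS (dc (dc b))) (PS (dc (dc (dc b)))) z = B) by (unfold B; ring).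
    rewrite EA, EB, Re_plus_R.
    assert (- Cmod A <= Re A) by (generalize (re_le_Cmod A); unfold Rabs; destruct Rcase_abs; lra).
    assert (Hx1 : x < 1) by exact Hz.
    assert (x * Sv <= x * (2 * (gamma - lambda))) by (apply Rmult_le_compat_l; lra).
    assert (x * Sv / 2 < gamma - lambda) by nra.
    unfold Rgt. lra.
Qed.
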